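(* Let $B$, $C$ be unital $\mathrm{C}^*$-algebras and let $\phi,\psi\colon B\to C$ be surjective $*$-homomorphisms. Assume that $C$ has trivial center. If $c\in C$ satisfies $\phi(b)c=c\psi(b)$ for all $b\in B$, then either $c$ is invertible or $c=0$. *)

(* Defs.v *)
From HB Require Import structures.
From mathcomp Require Import all_boot all_order all_algebra.
From mathcomp Require Import reals.
From mathcomp Require Import complex.
Set Implicit Arguments. Unset Strict Implicit. Unset Printing Implicit Defensive.
Import Order.TTheory GRing.Theory Num.Theory.
Local Open Scope ring_scope.
Local Open Scope complex_scope.

Definition is_unital_Cstar (R : realType) (A : algType R[i])
    (star : A -> A) (nrm : A -> R) : Prop :=
      (forall x, star (star x) = x) /\
      (forall x y, star (x + y) = star x + star y) /\
      (forall (a : R[i]) x, star (a *: x) = a^* *: star x) /\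
      (forall x y, star (x * y) = star y * star x) /\
      (forall x, 0 <= nrm x) /\ (forall x, nrm x = 0 -> x = 0) /\
      (forall x y, nrm (x + y) <= nrm x + nrm y) /\
      (forall (a : R[i]) x, (nrm (a *: x))%:C = `|a| * (nrm x)%:C) /\
      (forall x y, nrm (x * y) <= nrm x * nrm y) /\
      (forall x, nrm (star x * x) = nrm x ^+ 2) /\
      (forall u : nat -> A,
         (forall e : R, 0 < e -> exists N, forall m n, (N <= m)%N -> (N <= n)%N ->
             nrm (u m - u n) < e) ->
         exists l : A, forall e : R, 0 < e -> exists N, forall n, (N <= n)%N ->
             nrm (u n - l) < e).

(* *-homomorphism between *-algebras: complex linear, multiplicative,
   star-preserving (unitality is not required). *)
Definition is_star_hom (R : realType) (A B : algType R[i])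
    (starA : A -> A) (starB : B -> B) (f : A -> B) : Prop :=
  [/\ (forall x y, f (x + y) = f x + f y),
      (forall (a : R[i]) x, f (a *: x) = a *: f x),
      (forall x y, f (x * y) = f x * f y) &
      (forall x, f (starA x) = starB (f x))].

Definition trivial_center (R : realType) (A : algType R[i]) : Prop :=
  forall z : A, (forall x : A, z * x = x * z) -> exists a : R[i], z = a *: 1.

Definition invertible (R : realType) (A : algType R[i]) (c : A) : Prop :=
  exists d : A, c * d = 1 /\ d * c = 1.

(* Main.v *)
Require Import Defs.
From HB Require Import structures.
From mathcomp Require Import all_boot all_order all_algebra.
From mathcomp Require Import reals complex.
Import Order.TTheory GRing.Theory Num.Theory.
Local Open Scope ring_scope.

Theorem lemma3p1 (R : realType) (B C : algType R[i])
    (starB : B -> B) (nrmB : B -> R) (starC : C -> C) (nrmC : C -> R)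
    (HB : is_unital_Cstar starB nrmB) (HC : is_unital_Cstar starC nrmC)
    (phi psi : B -> C)
    (Hphi : is_star_hom starB starC phi) (Hpsi : is_star_hom starB starC psi)
    (phi_surj : forall y : C, exists x : B, phi x = y)
    (psi_surj : forall y : C, exists x : B, psi x = y)
    (Hcenter : trivial_center C)
    (c : C) (Hc : forall b : B, phi b * c = c * psi b) :
  invertible c \/ c = 0.
Proof.
have [Hss [Hsadd [Hsscal [Hsmul [Hn0 [Hnz [Htri [Hnscal [Hnmul [Hcstar _]]]]]]]]]] := HC.
case: Hphi => _ _ _ Hphis.
case: Hpsi => _ _ _ Hpsis.
set d := starC c.
have Hd : forall b, d * phi b = psi b * d.
  move=> b; have := congr1 starC (Hc (starB b)).
  by rewrite !Hsmul Hphis Hpsis !Hss.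
have s0 : starC 0 = 0.
  have := Hsadd 0 0; rewrite addr0 => h.
  by apply: (addrI (starC 0)); rewrite addr0 -h.
have n0 : nrmC 0 = 0.
  have := Hnscal 0 0; rewrite scale0r normr0 mul0r => /eqP.
  by move/eqP => h; have := congr1 (@complex.Re R) h.
have cd_c : forall x, (c * d) * x = x * (c * d).
  move=> x; have [b <-] := phi_surj x.
  by rewrite -mulrA Hd mulrA -Hc -mulrA.
have dc_c : forall x, (d * c) * x = x * (d * c).
  move=> x; have [b <-] := psi_surj x.
  by rewrite -mulrA -Hc mulrA Hd -mulrA.
have [a Ha] := Hcenter _ cd_c.
have [b Hb] := Hcenter _ dc_c.
have [a0e|a0] := eqVneq a 0.
  right; move: Ha; rewrite a0e; rewrite scale0r => Ha.
  have : nrmC d ^+ 2 = 0 by rewrite -Hcstar /d Hss Ha n0.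
  move/eqP; rewrite expf_eq0 /= => /eqP/Hnz Hd0.
  by rewrite -(Hss c) -/d Hd0 s0.
have [b0e|b0] := eqVneq b 0.
  right; move: Hb; rewrite b0e; rewrite scale0r => Hb.
  have : nrmC c ^+ 2 = 0 by rewrite -Hcstar -/d Hb n0.
  by move/eqP; rewrite expf_eq0 /= => /eqP/Hnz.
left; exists (a^-1 *: d).
have r : c * (a^-1 *: d) = 1 by rewrite -scalerAr Ha scalerA mulVf // scale1r.
have l : (b^-1 *: d) * c = 1 by rewrite -scalerAl Hb scalerA mulVf // scale1r.
split => //.
have e : b^-1 *: d = a^-1 *: d.
  by rewrite -[LHS]mulr1 -r mulrA l mul1r.
by rewrite -e.
Qed.
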